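(* Algorithm 1 (as described in the context) is a decision procedure for DQBF: on every input DQBF $\Phi$ it terminates, and it returns TRUE if $\Phi$ is true and FALSE if $\Phi$ is false, for every admissible choice made during the run.
   Context: For a set $V$ of variables, $[V]$ is the set of assignments $V\to\{\textsc{true},\textsc{false}\}$; assignments are identified with terms of the literals they make true, $\neg\sigma$ is the clause of the negations of these literals, and $\sigma|_W$ denotes restriction. A DQBF is $\Phi=\forall u_1\ldots\forall u_n\exists e_1(D_1)\ldots\exists e_m(D_m).\varphi$ with pairwise distinct variables, $U=\{u_i\}$, $E=\{e_j\}$, dependency sets $D(e_j)=D_j\subseteq U$, $\varphi$ a CNF over $U\cup E$; a model is a family $(f_e)_{e\in E}$, $f_e:[D(e)]\to\{\textsc{true},\textsc{false}\}$, such that for all $\sigma\in[U]$ the assignment $\sigma$ together with $e\mapsto f_e(\sigma|_{D(e)})$ satisfies $\varphi$; $\Phi$ is true iff it has a model, false otherwise. A definition of a variable $x$ by a set $X$ in a formula $\chi$ is a formula $\psi$ with $\mathit{var}(\psi)\subseteq X$ such that every satisfying assignment $\lambda$ of $\chi$ has $\lambda(x)=\psi[\lambda]$. Arbiter variables $e^\sigma$ ($e\in E$, $\sigma\in[D(e)]$) are fresh variables. Algorithm 1. Phase 1: set $A=\emptyset$, $\varphi_A=\emptyset$, $\psi_{\mathit{Def}}=$ empty conjunction. For $i=1,\dots,m$: while $e_i$ has no definition by $A\cup D_i$ in $\varphi\wedge\varphi_A$, choose $\xi\in[D_i\cup A]$ such that both $\varphi\wedge\varphi_A\wedge\xi\wedge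 e_i$ and $\varphi\wedge\varphi_A\wedge\xi\wedge\neg e_i$ are satisfiable, let $\sigma=\xi|_{D_i}$, add $e_i^\sigma$ to $A$ and the clauses $(e_i^\sigma\vee\neg\sigma\vee\neg e_i)$, $(\neg e_i^\sigma\vee\neg\sigma\vee e_i)$ to $\varphi_A$. Then choose a definition $\psi^i$ of $e_i$ by $A\cup D_i$ in $\varphi\wedge\varphi_A$ and conjoin $(e_i\leftrightarrow\psi^i)$ to $\psi_{\mathit{Def}}$. Phase 2: let $\tau\in[A]$ set all arbiter variables true, $\mathcal{C}=\emptyset$. Repeat: if $\neg\varphi\wedge\psi_{\mathit{Def}}\wedge\tau$ is unsatisfiable, return TRUE; otherwise choose a satisfying assignment $\sigma$ of it, choose a subset $\rho$ of the literals of $\tau\wedge\sigma|_U$ with $\varphi\wedge\varphi_A\wedge\rho$ unsatisfiable, add the clause $\neg(\rho|_A)$ to $\mathcal{C}$; if $\mathcal{C}$ is satisfiable, let $\tau\in[A]$ satisfy $\mathcal{C}$ and repeat, else return FALSE. *)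

(* Defs.v *)
From mathcomp Require Import all_boot.
Set Implicit Arguments. Unset Strict Implicit. Unset Printing Implicit Defensive.

Inductive form (V : Type) : Type :=
| FTrue | FFalse | FVar of V | FNot of form V
| FAnd of form V & form V | FOr of form V & form V.
Arguments FTrue {V}. Arguments FFalse {V}.

Fixpoint eval (V : Type) (lam : V -> bool) (f : form V) : bool :=
  match f with
  | FTrue => true | FFalse => false | FVar v => lam v
  | FNot g => ~~ eval lam g
  | FAnd g h => eval lam g && eval lam h
  | FOr g h => eval lam g || eval lam h
  end.

Fixpoint fvars (V : Type) (f : form V) : seq V :=
  match f with
  | FTrue | FFalse => [::] | FVar v => [:: v]
  | FNot g => fvars g
  | FAnd g h | FOr g h => fvars g ++ fvars h
  end.

Definition FIff (V : Type) (a b : form V) : form V :=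
  FAnd (FOr (FNot a) b) (FOr (FNot b) a).

Definition bigAnd (V : Type) (s : seq (form V)) : form V := foldr (@FAnd V) FTrue s.
Definition bigOr (V : Type) (s : seq (form V)) : form V := foldr (@FOr V) FFalse s.

Definition lit (V : Type) (l : bool * V) : form V :=
  if l.1 then FVar l.2 else FNot (FVar l.2).

Definition clause (V : Type) := seq (bool * V).
Definition cnf (V : Type) (cls : seq (clause V)) : form V :=
  bigAnd (map (fun c => bigOr (map (@lit V) c)) cls).

Definition sat (V : Type) (f : form V) : Prop := exists lam : V -> bool, eval lam f.

Definition term (V : finType) (lam : V -> bool) (X : {set V}) : form V :=
  bigAnd [seq lit (lam x, x) | x <- enum X].

Definition is_definition (V : finType) (chi : form V) (x : V) (X : {set V})
    (psi : form V) : Prop :=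
  all (fun v => v \in X) (fvars psi) /\
  forall lam : V -> bool, eval lam chi -> lam x = eval lam psi.

Definition has_definition (V : finType) (chi : form V) (x : V) (X : {set V}) : Prop :=
  exists psi, is_definition chi x X psi.

Definition restr (n : nat) (D : {set 'I_n}) (g : 'I_n -> bool) : {ffun 'I_n -> option bool} :=
  [ffun x => if x \in D then Some (g x) else None].

(* DQBF  forall u_1..u_n exists e_1(D_1)..e_m(D_m). phi                *)
(* universal u_x = x : 'I_n, existential e_j = j : 'I_m,               *)
(* phi a CNF over 'I_n + 'I_m (inl = universal, inr = existential)    *)
Definition matrix_sat (n m : nat) (lam : 'I_n + 'I_m -> bool)
    (phi : seq (clause ('I_n + 'I_m))) : bool :=
  all (fun c => has (fun l => lam l.2 == l.1) c) phi.

(* a model: f_j : [D_j] -> bool, where an element of [D_j] is a partial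
   assignment with domain D_j *)
Definition dqbf_true (n m : nat) (D : 'I_m -> {set 'I_n})
    (phi : seq (clause ('I_n + 'I_m))) : Prop :=
  exists f : 'I_m -> {ffun 'I_n -> option bool} -> bool,
    forall sigma : 'I_n -> bool,
      matrix_sat (fun v => match v with
                           | inl x => sigma x
                           | inr j => f j (restr (D j) sigma)
                           end) phi.

(* Variables of the algorithm: universals, existentials, arbiters.    *)
(* The arbiter e_j^sigma, sigma in [D_j], is inr (j, sigma) where      *)
(* sigma is a partial assignment with domain D_j.                      *)
Definition avar (n m : nat) : finType :=
  (('I_n + 'I_m) + ('I_m * {ffun 'I_n -> option bool}))%type.

Section Algorithm.
Variables (n m : nat) (D : 'I_m -> {set 'I_n}) (phi : seq (clause ('I_n + 'I_m))).

Local Notation V := (avar n m).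
Definition UV (x : 'I_n) : V := inl (inl x).
Definition EV (j : 'I_m) : V := inl (inr j).
Definition AV (j : 'I_m) (s : {ffun 'I_n -> option bool}) : V := inr (j, s).

Definition phiF : form V := cnf [seq [seq (l.1, inl l.2 : V) | l <- c] | c <- phi].

Definition chi (phiA : seq (clause V)) : form V := FAnd phiF (cnf phiA).

Inductive state : Type :=
| Phase1 of nat & {set V} & seq (clause V) & form V
    (* loop index i (0-based), A, phi_A, psi_Def *)
| Phase2 of {set V} & seq (clause V) & form V & (V -> bool) & seq (clause V)
    (* A, phi_A, psi_Def, tau, C *)
| Ret of bool.

Definition init : state := Phase1 0 set0 [::] FTrue.

Inductive step : state -> state -> Prop :=
| step_arbiter (i : nat) (Hi : i < m) (A : {set V}) (phiA : seq (clause V))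
    (psiDef : form V) (xi : V -> bool) :
    let j := Ordinal Hi in
    let X := (UV @: D j) :|: A in
    ~ has_definition (chi phiA) (EV j) X ->
    sat (FAnd (chi phiA) (FAnd (term xi X) (FVar (EV j)))) ->
    sat (FAnd (chi phiA) (FAnd (term xi X) (FNot (FVar (EV j))))) ->
    let s := restr (D j) (fun x => xi (UV x)) in
    let negsig := [seq (~~ xi (UV x), UV x) | x <- enum (D j)] in
    step (Phase1 i A phiA psiDef)
         (Phase1 i (AV j s |: A)
            [:: (true, AV j s) :: (false, EV j) :: negsig,
                (false, AV j s) :: (true, EV j) :: negsig & phiA]
            psiDef)
| step_define (i : nat) (Hi : i < m) (A : {set V}) (phiA : seq (clause V))
    (psiDef psi : form V) :
    let j := Ordinal Hi in
    is_definition (chi phiA) (EV j) ((UV @: D j) :|: A) psi ->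
    step (Phase1 i A phiA psiDef)
         (Phase1 i.+1 A phiA (FAnd psiDef (FIff (FVar (EV j)) psi)))
| step_phase2 (A : {set V}) (phiA : seq (clause V)) (psiDef : form V) :
    step (Phase1 m A phiA psiDef) (Phase2 A phiA psiDef (fun _ => true) [::])
| step_true (A : {set V}) (phiA : seq (clause V)) (psiDef : form V)
    (tau : V -> bool) (C : seq (clause V)) :
    ~ sat (FAnd (FNot phiF) (FAnd psiDef (term tau A))) ->
    step (Phase2 A phiA psiDef tau C) (Ret true)
| step_refine (A : {set V}) (phiA : seq (clause V)) (psiDef : form V)
    (tau : V -> bool) (C : seq (clause V)) (sigma : V -> bool)
    (rho : seq (bool * V)) (tau' : V -> bool) :
    eval sigma (FAnd (FNot phiF) (FAnd psiDef (term tau A))) ->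
    all (fun l => l \in [seq (tau a, a) | a <- enum A] ++
                        [seq (sigma (UV x), UV x) | x <- enum 'I_n]) rho ->
    ~ sat (FAnd (chi phiA) (bigAnd (map (@lit V) rho))) ->
    let C' := [seq (~~ l.1, l.2) | l <- rho & l.2 \in A] :: C in
    eval tau' (cnf C') ->
    step (Phase2 A phiA psiDef tau C) (Phase2 A phiA psiDef tau' C')
| step_false (A : {set V}) (phiA : seq (clause V)) (psiDef : form V)
    (tau : V -> bool) (C : seq (clause V)) (sigma : V -> bool)
    (rho : seq (bool * V)) :
    eval sigma (FAnd (FNot phiF) (FAnd psiDef (term tau A))) ->
    all (fun l => l \in [seq (tau a, a) | a <- enum A] ++
                        [seq (sigma (UV x), UV x) | x <- enum 'I_n]) rho ->
    ~ sat (FAnd (chi phiA) (bigAnd (map (@lit V) rho))) ->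
    let C' := [seq (~~ l.1, l.2) | l <- rho & l.2 \in A] :: C in
    ~ sat (cnf C') ->
    step (Phase2 A phiA psiDef tau C) (Ret false).

Inductive reachable : state -> Prop :=
| reach_init : reachable init
| reach_step s s' : reachable s -> step s s' -> reachable s'.

End Algorithm.

(* Main.v *)
Require Import Defs.
From mathcomp Require Import all_boot zify.
From Stdlib Require Import Classical.
Set Implicit Arguments. Unset Strict Implicit. Unset Printing Implicit Defensive.

Lemma eval_lit (V : Type) (lam : V -> bool) (l : bool * V) :
  eval lam (lit l) = (lam l.2 == l.1).
Proof. by case: l => [[] v] /=; case: (lam v). Qed.

Lemma eval_bigAnd (V : Type) (lam : V -> bool) s :
  eval lam (bigAnd s) = all (eval lam) s.
Proof. by elim: s => //= f s ->. Qed.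

Lemma eval_bigOr (V : Type) (lam : V -> bool) s :
  eval lam (bigOr s) = has (eval lam) s.
Proof. by elim: s => //= f s ->. Qed.

Lemma eval_clause (V : Type) (lam : V -> bool) (c : clause V) :
  eval lam (bigOr (map (@lit V) c)) = has (fun l => lam l.2 == l.1) c.
Proof. rewrite eval_bigOr has_map; apply: eq_has => l /=; exact: eval_lit. Qed.

Lemma eval_cnf (V : Type) (lam : V -> bool) cls :
  eval lam (cnf cls) = all (fun c => has (fun l => lam l.2 == l.1) c) cls.
Proof.
rewrite /cnf eval_bigAnd all_map; apply: eq_all => c /=; exact: eval_clause.
Qed.

Lemma eval_cnf_cons (V : Type) (lam : V -> bool) c cls :
  eval lam (cnf (c :: cls)) = has (fun l => lam l.2 == l.1) c && eval lam (cnf cls).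
Proof. by rewrite !eval_cnf. Qed.

Lemma eval_ext (V : eqType) (lam lam' : V -> bool) (f : form V) :
  (forall v, v \in fvars f -> lam v = lam' v) -> eval lam f = eval lam' f.
Proof.
elim: f => //= [v|g IH|g IHg h IHh|g IHg h IHh] H.
- by apply: H; rewrite mem_head.
- by rewrite IH.
- by rewrite IHg ?IHh // => v Hv; apply: H; rewrite mem_cat Hv ?orbT.
- by rewrite IHg ?IHh // => v Hv; apply: H; rewrite mem_cat Hv ?orbT.
Qed.

Lemma eval_FIff (V : Type) (lam : V -> bool) a b :
  eval lam (FIff a b) = (eval lam a == eval lam b).
Proof. by rewrite /=; case: (eval lam a); case: (eval lam b). Qed.

Lemma termP (V : finType) (lam t : V -> bool) (X : {set V}) :
  reflect (forall x, x \in X -> lam x = t x) (eval lam (term t X)).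
Proof.
rewrite /term eval_bigAnd all_map.
apply: (iffP allP) => H x Hx.
- by apply/eqP; move: (H x); rewrite mem_enum /= eval_lit; apply.
- by rewrite /= eval_lit /=; apply/eqP; apply: H; rewrite -mem_enum.
Qed.

Lemma fvars_bigAnd (V : eqType) (P : pred V) s :
  all (fun f => all P (fvars f)) s -> all P (fvars (bigAnd s)).
Proof. by elim: s => //= f s IH /andP[H1 H2]; rewrite all_cat H1 IH. Qed.

Lemma fvars_bigOr (V : eqType) (P : pred V) s :
  all (fun f => all P (fvars f)) s -> all P (fvars (bigOr s)).
Proof. by elim: s => //= f s IH /andP[H1 H2]; rewrite all_cat H1 IH. Qed.

Lemma fvars_term (V : finType) (t : V -> bool) (X : {set V}) :
  all (fun v => v \in X) (fvars (term t X)).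
Proof.
rewrite /term; apply: (@fvars_bigAnd _ (fun v => v \in X)).
rewrite all_map; apply/allP => x Hx /=.
by rewrite /lit /=; case: (t x) => /=; rewrite andbT -mem_enum.
Qed.

Lemma term_self (V : finType) (t : V -> bool) (X : {set V}) : eval t (term t X).
Proof. by apply/termP. Qed.

Lemma nodef_witness (V : finType) (ch : form V) (e : V) (X : {set V}) :
  ~ has_definition ch e X ->
  exists xi : V -> bool, sat (FAnd ch (FAnd (term xi X) (FVar e))) /\
                         sat (FAnd ch (FAnd (term xi X) (FNot (FVar e)))).
Proof.
move=> Hnd; apply: NNPP => Hno; apply: Hnd.
pose psi := bigOr [seq term (fun v => f v) X |
                   f : {ffun V -> bool} <- enum {ffun V -> bool} & eval (fun v => f v) ch && f e].
exists psi; split.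
- apply: fvars_bigOr; rewrite all_map; apply/allP => f _ /=; exact: fvars_term.
- move=> lam Hlam; rewrite eval_bigOr has_map.
  case Hle: (lam e).
  + apply/esym/hasP; exists [ffun v => lam v].
    * rewrite mem_filter mem_enum andbT ffunE Hle andbT.
      by rewrite (@eval_ext _ _ lam) // => v _; rewrite ffunE.
    * by apply/termP => x _ /=; rewrite ffunE.
  + apply/esym/negbTE/hasP => -[f].
    rewrite mem_filter => /andP[/andP[Hf Hfe] _] /= Ht.
    apply: Hno; exists (fun v => f v); split.
    * by exists (fun v => f v); rewrite /= Hf Hfe term_self.
    * by exists lam; rewrite /= Hlam Ht Hle.
Qed.
Section Main.
Variables (n m : nat) (D : 'I_m -> {set 'I_n}) (phi : seq (clause ('I_n + 'I_m))).
Local Notation V := (avar n m).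
Local Notation stp := (step D phi).

Definition negsig (j : 'I_m) (g : 'I_n -> bool) : clause V :=
  [seq (~~ g x, UV m x) | x <- enum (D j)].
Definition acl (b : bool) (j : 'I_m) (g : 'I_n -> bool) : clause V :=
  (b, AV j (restr (D j) g)) :: (~~ b, EV n j) :: negsig j g.

Definition isArb (v : V) : bool := if v is inr _ then true else false.

Definition CInv (A : {set V}) (phiA : seq (clause V)) : Prop :=
  [/\ (forall v, v \in A -> isArb v),
      (forall j s, AV j s \in A -> exists g, [/\ s = restr (D j) g,
                acl true j g \in phiA & acl false j g \in phiA]) &
      (forall c, c \in phiA -> exists b j g, c = acl b j g)].

Definition DInv (i : nat) (A : {set V}) (phiA : seq (clause V)) (psiDef : form V) : Prop :=
  exists F : 'I_m -> form V,
   [/\ (forall j, all (fun v => v \in (UV m @: D j) :|: A) (fvars (F j))),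
       (forall lam, eval lam psiDef =
           [forall j : 'I_m, (j < i) ==> (lam (EV n j) == eval lam (F j))]) &
       (forall j : 'I_m, j < i -> forall lam, eval lam (chi phi phiA) ->
           lam (EV n j) = eval lam (F j))].

Definition modelP (f : 'I_m -> {ffun 'I_n -> option bool} -> bool) : Prop :=
  forall sigma : 'I_n -> bool,
    matrix_sat (fun v => match v with
                         | inl x => sigma x
                         | inr j => f j (restr (D j) sigma) end) phi.

Definition arbA (f : 'I_m -> {ffun 'I_n -> option bool} -> bool) : V -> bool :=
  fun v => match v with inr (j, s) => f j s | _ => false end.

Definition Inv (s : state n m) : Prop :=
  match s with
  | Phase1 i A phiA psiDef => [/\ i <= m, CInv A phiA & DInv i A phiA psiDef]
  | Phase2 A phiA psiDef tau C =>
      [/\ CInv A phiA, DInv m A phiA psiDef, eval tau (cnf C) &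
          (forall f, modelP f -> eval (arbA f) (cnf C))]
  | Ret _ => True
  end.

Lemma eval_FAnd (lam : V -> bool) a b : eval lam (FAnd a b) = eval lam a && eval lam b.
Proof. by []. Qed.
Lemma eval_FNot (lam : V -> bool) a : eval lam (FNot a) = ~~ eval lam a.
Proof. by []. Qed.
Lemma eval_chiE (lam : V -> bool) phiA :
  eval lam (chi phi phiA) = eval lam (phiF phi) && eval lam (cnf phiA).
Proof. by []. Qed.

Lemma eval_phiF (lam : V -> bool) :
  eval lam (phiF phi) = matrix_sat (fun v => lam (inl v)) phi.
Proof.
rewrite /phiF eval_cnf all_map /matrix_sat; apply: eq_all => c /=.
by rewrite has_map; apply: eq_has => l.
Qed.

Lemma matrix_sat_ext (l1 l2 : 'I_n + 'I_m -> bool) :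
  l1 =1 l2 -> matrix_sat l1 phi = matrix_sat l2 phi.
Proof.
move=> H; rewrite /matrix_sat; apply: eq_all => c; apply: eq_has => l.
by rewrite H.
Qed.

Lemma cnf_mem (lam : V -> bool) cls c :
  eval lam (cnf cls) -> c \in cls -> has (fun l => lam l.2 == l.1) c.
Proof. by rewrite eval_cnf => /allP; apply. Qed.

Lemma acl_false (lam : V -> bool) b j g :
  lam (AV j (restr (D j) g)) = ~~ b -> lam (EV n j) = b ->
  (forall x, x \in D j -> lam (UV m x) = g x) ->
  ~~ has (fun l => lam l.2 == l.1) (acl b j g).
Proof.
move=> Ha He Hx; rewrite /acl /= Ha He.
have -> : has (fun l => lam l.2 == l.1) (negsig j g) = false.
  apply/negbTE/hasPn => l /mapP[x Hx' ->] /=.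
  by rewrite mem_enum in Hx'; rewrite Hx //; case: (g x).
by clear Ha He Hx; case: b.
Qed.

Lemma arbiter_new A phiA (j : 'I_m) (xi : V -> bool) :
  CInv A phiA ->
  sat (FAnd (chi phi phiA) (FAnd (term xi ((UV m @: D j) :|: A)) (FVar (EV n j)))) ->
  sat (FAnd (chi phi phiA) (FAnd (term xi ((UV m @: D j) :|: A)) (FNot (FVar (EV n j))))) ->
  AV j (restr (D j) (fun x => xi (UV m x))) \notin A.
Proof.
move=> [HA HB HC] [l1 H1] [l2 H2]; apply/negP => Hin.
have [g [Hs Hc1 Hc2]] := HB _ _ Hin.
move: H1 H2; rewrite !eval_FAnd !eval_FNot /=.
move=> /andP[/andP[_ Hch1] /andP[/termP Ht1 He1]] /andP[/andP[_ Hch2] /andP[/termP Ht2 He2]].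
have Hg : forall x, x \in D j -> xi (UV m x) = g x.
  move=> x Hx; move/ffunP: Hs => /(_ x); rewrite !ffunE Hx; by case.
have HXa : AV j (restr (D j) g) \in (UV m @: D j) :|: A by rewrite -Hs inE Hin orbT.
have HXu : forall x, x \in D j -> UV m x \in (UV m @: D j) :|: A.
  by move=> x Hx; rewrite inE; apply/orP; left; apply: imset_f.
case Hxa: (xi (AV j (restr (D j) g))).
- have := cnf_mem Hch2 Hc2; apply/negP; apply: acl_false.
  + by rewrite Ht2.
  + by apply/negbTE.
  + by move=> x Hx; rewrite Ht2 ?Hg ?HXu.
- have := cnf_mem Hch1 Hc1; apply/negP; apply: acl_false.
  + by rewrite Ht1.
  + by [].
  + by move=> x Hx; rewrite Ht1 ?Hg ?HXu.
Qed.


Lemma eval_cons_chi (lam : V -> bool) c phiA :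
  eval lam (chi phi (c :: phiA)) -> eval lam (chi phi phiA).
Proof. by rewrite !eval_chiE eval_cnf_cons => /andP[-> /andP[_ ->]]. Qed.

Lemma inv_init : Inv (init n m).
Proof.
split => //.
- by split => // [v|j s]; rewrite in_set0.
- exists (fun _ => FTrue); split => //.
  by move=> lam; apply/esym/forallP => j.
Qed.

Lemma newclause A phiA (tau sigma : V -> bool) (rho : seq (bool * V)) f :
  CInv A phiA -> modelP f ->
  all (fun l => l \in [seq (tau a, a) | a <- enum A] ++
                      [seq (sigma (UV m x), UV m x) | x <- enum 'I_n]) rho ->
  ~ sat (FAnd (chi phi phiA) (bigAnd (map (@lit V) rho))) ->
  has (fun l => arbA f l.2 == l.1) [seq (~~ l.1, l.2) | l <- rho & l.2 \in A].
Proof.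
move=> [HA HB HC] Hf Hrho Hns.
case Hh: (has _ _) => //; exfalso; apply: Hns.
have Hall : forall l, l \in rho -> l.2 \in A -> arbA f l.2 = l.1.
  move=> l Hl HlA; move/negbT/hasPn: Hh => /(_ (~~ l.1, l.2)).
  rewrite map_f ?mem_filter ?HlA ?Hl //= => /(_ isT).
  by case: (arbA f l.2); case: (l.1).
pose s' x := sigma (UV m x).
pose lam : V -> bool := fun v => match v with
   | inl (inl x) => s' x
   | inl (inr j) => f j (restr (D j) s')
   | inr (j, s) => f j s end.
exists lam; rewrite eval_FAnd eval_chiE eval_phiF; apply/andP; split; [apply/andP; split|].
- exact: Hf.
- rewrite eval_cnf; apply/allP => c Hc; have [b [j [g ->]]] := HC c Hc.
  case: (boolP [forall x in D j, s' x == g x]) => Hfa.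
  + have Hr : restr (D j) s' = restr (D j) g.
      apply/ffunP => x; rewrite !ffunE; case: ifP => // Hx.
      by move/forall_inP: Hfa => /(_ x Hx)/eqP ->.
    rewrite /acl /= Hr; clear; by case: b; case: (f j (restr (D j) g)).
  + move: Hfa; rewrite negb_forall_in => /exists_inP[x Hx Hne].
    apply/hasP; exists (~~ g x, UV m x).
    * rewrite /acl !in_cons; apply/orP; right; apply/orP; right.
      by apply: map_f; rewrite mem_enum.
    * by move: Hne => /=; case: (s' x); case: (g x).
- rewrite eval_bigAnd all_map; apply/allP => l Hl /=; rewrite eval_lit.
  move/allP: Hrho => /(_ l Hl); rewrite mem_cat => /orP[/mapP[a Ha El]|/mapP[x _ El]].
  + rewrite mem_enum in Ha.
    have := Hall l Hl; rewrite El /= => /(_ Ha) <-.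
    have := HA a Ha; by case: a {Ha El} => [[]|[]].
  + by rewrite El.
Qed.

Lemma inv_step s s' : Inv s -> stp s s' -> Inv s'.
Proof.
move=> Hinv Hst; case: s s' / Hst Hinv.
- move=> i Hi A phiA psiDef xi j X Hnd H1 H2 s ns [Him [HA HB HC] [F [HF1 HF2 HF3]]].
  pose g := fun x => xi (UV m x).
  have E1 : (true, AV j s) :: (false, EV n j) :: ns = acl true j g by [].
  have E2 : (false, AV j s) :: (true, EV n j) :: ns = acl false j g by [].
  rewrite E1 E2; split => //.
  + split.
    * move=> v; rewrite in_setU1 => /orP[/eqP -> //|]; exact: HA.
    * move=> j' s'; rewrite in_setU1 => /orP[/eqP [-> ->]|Hin].
      - by exists g; split; rewrite ?in_cons ?eqxx ?orbT.
      - have [g' [Hs' Hc1 Hc2]] := HB _ _ Hin.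
        by exists g'; split; rewrite ?in_cons ?Hc1 ?Hc2 ?orbT.
    * move=> c; rewrite !in_cons => /orP[/eqP ->|/orP[/eqP ->|Hc]].
      - by exists true, j, g.
      - by exists false, j, g.
      - exact: HC.
  + exists F; split => //.
    * move=> k; apply: sub_all (HF1 k) => v; rewrite !inE => /orP[->//|->].
      by rewrite !orbT.
    * move=> k Hk lam /eval_cons_chi /eval_cons_chi; exact: HF3.
- move=> i Hi A phiA psiDef psi j [Hpsi1 Hpsi2] [Him HCI [F [HF1 HF2 HF3]]].
  split => //.
  pose F' := fun k => if k == j then psi else F k.
  exists F'; split.
  + by move=> k; rewrite /F'; case: eqP => [->|_].
  + move=> lam; rewrite eval_FAnd HF2 eval_FIff /=.
    apply/idP/idP.
    * move=> /andP[/forallP H1 /eqP H2]; apply/forallP => k; apply/implyP => Hk.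
      rewrite /F'; case: (k =P j) => [->|Hne]; first by rewrite H2.
      have Hki : k < i.
        have : (k : nat) <> i by move=> E; apply: Hne; apply: val_inj.
        move: Hk; rewrite ltnS leq_eqVlt => /orP[/eqP //|//].
      by move: (H1 k); rewrite Hki.
    * move=> /forallP H; apply/andP; split.
      - apply/forallP => k; apply/implyP => Hk; move: (H k).
        rewrite ltnS ltnW //= /F'; case: (k =P j) => [E|_] //.
        by move: Hk; rewrite E /= ltnn.
      - by move: (H j); rewrite /= ltnSn /F' eqxx.
  + move=> k Hk lam Hlam; rewrite /F'; case: eqP => [->|Hne]; first exact: Hpsi2.
    apply: HF3 Hlam.
    have : (k : nat) <> i by move=> E; apply: Hne; apply: val_inj.
    move: Hk; rewrite ltnS leq_eqVlt => /orP[/eqP //|//].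
- move=> A phiA psiDef [_ HCI HDI]; split => //.
- by [].
- move=> A phiA psiDef tau C sigma rho tau' Hs Hrho Hns C' Htau' [HCI HDI Htau HM].
  split => //.
  move=> f Hf; rewrite eval_cnf_cons HM // andbT.
  exact: newclause Hrho Hns.
- by [].
Qed.

Lemma inv_reach s : reachable D phi s -> Inv s.
Proof.
elim => [|s1 s2 _ IH Hst]; first exact: inv_init.
exact: inv_step IH Hst.
Qed.


Lemma phase2_unsat A phiA psiDef (tau sigma : V -> bool) :
  CInv A phiA -> DInv m A phiA psiDef ->
  eval sigma (FAnd (FNot (phiF phi)) (FAnd psiDef (term tau A))) ->
  ~ sat (FAnd (chi phi phiA) (bigAnd (map (@lit V)
      ([seq (tau a, a) | a <- enum A] ++ [seq (sigma (UV m x), UV m x) | x <- enum 'I_n])))).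
Proof.
move=> [HA _ _] [F [HF1 HF2 HF3]].
rewrite !eval_FAnd eval_FNot => /andP[Hnphi /andP[Hpsi /termP Ht]] [lam].
rewrite eval_FAnd => /andP[Hchi].
rewrite eval_bigAnd all_map => /allP Hrho.
have HagA : forall a, a \in A -> lam a = sigma a.
  move=> a Ha; rewrite Ht //.
  have := Hrho (tau a, a); rewrite /= eval_lit => /(_ _)/eqP; apply.
  by rewrite mem_cat map_f ?mem_enum.
have HagU : forall x, lam (UV m x) = sigma (UV m x).
  move=> x; have := Hrho (sigma (UV m x), UV m x); rewrite /= eval_lit => /(_ _)/eqP; apply.
  by rewrite mem_cat orbC map_f ?mem_enum.
have HagE : forall j, lam (EV n j) = sigma (EV n j).
  move=> j; rewrite (HF3 j (ltn_ord j) lam Hchi).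
  move: Hpsi; rewrite HF2 => /forallP/(_ j); rewrite ltn_ord /= => /eqP ->.
  apply: eval_ext => v Hv; move/allP: (HF1 j) => /(_ v Hv).
  rewrite in_setU => /orP[/imsetP[x _ ->]|HvA]; [exact: HagU | exact: HagA].
move: Hchi; rewrite eval_chiE => /andP[Hphi _].
have Hm : matrix_sat (fun v => sigma (inl v)) phi = matrix_sat (fun v => lam (inl v)) phi.
  by apply: matrix_sat_ext; case=> [x|j]; [exact/esym/HagU | exact/esym/HagE].
by move: Hnphi; rewrite eval_phiF Hm -eval_phiF Hphi.
Qed.

Lemma phase2_true A phiA psiDef (tau : V -> bool) :
  CInv A phiA -> DInv m A phiA psiDef ->
  ~ sat (FAnd (FNot (phiF phi)) (FAnd psiDef (term tau A))) ->
  dqbf_true D phi.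
Proof.
move=> [HA _ _] [F [HF1 HF2 HF3]] Hns.
pose lamS (s : {ffun 'I_n -> option bool}) : V -> bool := fun v =>
  match v with inl (inl x) => s x == Some true | inl (inr _) => false | inr _ => tau v end.
pose f j s := eval (lamS s) (F j).
exists f => sigma.
pose lam : V -> bool := fun v => match v with
   | inl (inl x) => sigma x
   | inl (inr j) => f j (restr (D j) sigma)
   | inr _ => tau v end.
have Hpsi : eval lam psiDef.
  rewrite HF2; apply/forallP => j; apply/implyP => _; apply/eqP.
  rewrite /= /f; apply: eval_ext => v Hv; move/allP: (HF1 j) => /(_ v Hv).
  rewrite in_setU => /orP[/imsetP[x Hx ->]|HvA].
  - by rewrite /= ffunE Hx; case: (sigma x).
  - by have := HA v HvA; case: v {Hv HvA} => [[]|].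
have Ht : eval lam (term tau A).
  by apply/termP => a Ha; have := HA a Ha; case: a {Ha} => [[]|].
case E: (eval lam (phiF phi)).
- by move: E; rewrite eval_phiF.
- exfalso; apply: Hns; exists lam; by rewrite !eval_FAnd eval_FNot E Hpsi Ht.
Qed.

Lemma progress s : Inv s -> (exists b, s = Ret n m b) \/ exists s', stp s s'.
Proof.
case: s => [i A phiA psiDef|A phiA psiDef tau C|b]; last by left; exists b.
- move=> [Him HCI HDI]; right.
  case: (ltnP i m) => Hi.
  + case: (classic (has_definition (chi phi phiA) (EV n (Ordinal Hi))
                      ((UV m @: D (Ordinal Hi)) :|: A))) => Hd.
    * case: Hd => psi Hpsi; eexists; exact: (@step_define n m D phi i Hi A phiA psiDef psi Hpsi).
    * have [xi [H1 H2]] := nodef_witness Hd.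
      eexists; exact: (@step_arbiter n m D phi i Hi A phiA psiDef xi Hd H1 H2).
  + have -> : i = m by apply/eqP; rewrite eqn_leq Him Hi.
    eexists; exact: step_phase2.
- move=> [HCI HDI Htau HM]; right.
  case: (classic (sat (FAnd (FNot (phiF phi)) (FAnd psiDef (term tau A))))) => Hs.
  + case: Hs => sigma Hsig.
    set rho := [seq (tau a, a) | a <- enum A] ++ [seq (sigma (UV m x), UV m x) | x <- enum 'I_n].
    have Hrho : all (fun l => l \in [seq (tau a, a) | a <- enum A] ++
                        [seq (sigma (UV m x), UV m x) | x <- enum 'I_n]) rho.
      by apply/allP.
    have Hns := phase2_unsat HCI HDI Hsig.
    case: (classic (sat (cnf ([seq (~~ l.1, l.2) | l <- rho & l.2 \in A] :: C)))) => Hc.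
    * case: Hc => tau' Ht'.
      eexists; exact: (@step_refine n m D phi A phiA psiDef tau C sigma rho tau' Hsig Hrho Hns Ht').
    * eexists; exact: (@step_false n m D phi A phiA psiDef tau C sigma rho Hsig Hrho Hns Hc).
  + eexists; exact: (@step_true n m D phi A phiA psiDef tau C Hs).
Qed.


Definition Sset (C : seq (clause V)) : {set {set V}} :=
  [set t : {set V} | eval (fun v => v \in t) (cnf C)].

Definition meas (s : state n m) : nat :=
  match s with
  | Phase1 i A _ _ => #|{set V}|.+2 + (m - i) * #|V|.+1 + (#|V|.+1 - #|A|)
  | Phase2 _ _ _ _ C => #|Sset C|.+1
  | Ret _ => 0
  end.

Lemma arith1 (K k N a : nat) : a < N -> K + k * N + (N - (1 + a)) < K + k * N + (N - a).
Proof. lia. Qed.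
Lemma arith2 (K a b N r : nat) : a < b -> K + a * N.+1 + r < K + b * N.+1 + r.
Proof. move=> H; rewrite ltn_add2r ltn_add2l ltn_mul2r /=; exact: H. Qed.
Lemma arith3 (a K Y Z : nat) : a <= K -> a.+1 < K.+2 + Y + Z.
Proof. lia. Qed.

Lemma meas_step s s' : Inv s -> stp s s' -> meas s' < meas s.
Proof.
move=> Hinv Hst; case: s s' / Hst Hinv.
- move=> i Hi A phiA psiDef xi j X Hnd H1 H2 s ns [Him HCI HDI] /=.
  have Hnew := arbiter_new HCI H1 H2.
  rewrite cardsU1 Hnew /=.
  apply: arith1; rewrite ltnS; exact: max_card.
- move=> i Hi A phiA psiDef psi j _ _ /=.
  apply: arith2; lia.
- move=> A phiA psiDef _.
  apply: arith3; exact: max_card.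
- by [].
- move=> A phiA psiDef tau C sigma rho tau' Hs Hrho Hns C' Htau' [[HA _ _] HDI Htau HM] /=.
  rewrite ltnS; apply: proper_card; apply/properP; split.
  + apply/subsetP => t; rewrite !inE eval_cnf_cons; by case/andP.
  + exists [set v | tau v].
    * by rewrite inE (@eval_ext _ _ tau) // => v _; rewrite inE.
    * rewrite inE (@eval_ext _ _ tau) ?eval_cnf_cons; last by move=> v _; rewrite inE.
      apply/negP => /andP[/hasP[l' /mapP[l]]]; rewrite mem_filter => /andP[HlA Hl] -> /= Hb _.
      move/allP: Hrho => /(_ l Hl); rewrite mem_cat => /orP[/mapP[a _ El]|/mapP[x _ El]].
      - by move: Hb; rewrite El /=; case: (tau a).
      - by move: HlA; rewrite El => /HA.
- by [].
Qed.

Lemma acc_reach s : reachable D phi s -> Acc (fun s' s => stp s s') s.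
Proof.
move=> Hs; have [k Hk] : exists k, meas s < k by exists (meas s).+1.
elim: k s Hs Hk => [//|k IH] s Hs Hk; constructor => s' Hst.
apply: IH; first exact: reach_step Hs Hst.
have := meas_step (inv_reach Hs) Hst; lia.
Qed.

Lemma ret_step s b : Inv s -> stp s (Ret n m b) -> (b = true <-> dqbf_true D phi).
Proof.
move=> Hinv Hst; inversion Hst; subst.
- split => // _; case: Hinv => HCI HDI _ _; apply: phase2_true HCI HDI _; eassumption.
- split => // Hd; exfalso.
  case: Hinv => HCI HDI _ HM; case: Hd => f Hf.
  match goal with H : ~ sat (cnf _) |- _ => apply: H end.
  exists (arbA f); rewrite eval_cnf_cons HM // andbT.
  apply: newclause HCI Hf _ _; eassumption.
Qed.

End Main.

Theorem corollary1 (n m : nat) (D : 'I_m -> {set 'I_n})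
    (phi : seq (clause ('I_n + 'I_m))) :
  (* termination: no infinite run from the initial state *)
  Acc (fun s' s => step D phi s s') (init n m) /\
  (* no run gets stuck: every reachable non-final state has an admissible step *)
  (forall s, reachable D phi s ->
     (exists b, s = Ret n m b) \/ exists s', step D phi s s') /\
  (* correctness of every returned answer *)
  (forall b, reachable D phi (Ret n m b) -> (b = true <-> dqbf_true D phi)).
Proof.
split; first exact: acc_reach (reach_init D phi).
split; first by move=> s Hs; apply: progress; exact: inv_reach.
move=> b H; inversion H as [E|s s' Hs Hst E].
apply: ret_step Hst; exact: inv_reach.
Qed.
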